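(* Let $\mathrm X$ be the Cantor set (a compact, totally disconnected metric space with no isolated points), let $\mathrm G$ be a countable discrete group, and let $\theta=(\{\mathrm X_t\}_{t\in\mathrm G},\{h_t\}_{t\in\mathrm G})$ be a topological partial action of $\mathrm G$ on $\mathrm X$ such that $\mathrm X_t$ is clopen for every $t\in\mathrm G$. Then the envelope space $\mathrm X^e$ is a locally compact Cantor set: it is Hausdorff, locally compact, has a countable basis consisting of clopen sets, and has no isolated points.
   Context: A (topological) partial action of a group $\mathrm G$ on a topological space $\mathrm X$ is a pair $\theta=(\{\mathrm X_t\}_{t\in\mathrm G},\{h_t\}_{t\in\mathrm G})$ where each $\mathrm X_t$ is an open subset of $\mathrm X$ and each $h_t:\mathrm X_{t^{-1}}\to\mathrm X_t$ is a homeomorphism, such that: (1) $\mathrm X_e=\mathrm X$ and $h_e=\mathrm{id}_{\mathrm X}$; (2) $h_t(\mathrm X_{t^{-1}}\cap\mathrm X_s)=\mathrm X_t\cap\mathrm X_{ts}$ for all $s,t$; (3) $h_t(h_s(x))=h_{ts}(x)$ for all $x\in\mathrm X_{s^{-1}}\cap\mathrm X_{s^{-1}t^{-1}}$. The envelope space $\mathrm X^e$ is the topological quotient of $\mathrm G\times\mathrm X$ ($\mathrm G$ discrete, product topology) by the equivalence relation $(r,x)\sim(s,y)\iff x\in\mathrm X_{r^{-1}s}$ and $h_{s^{-1}r}(x)=y$. *)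

(* Defs.v *)
From Stdlib Require Import List Classical.
Set Implicit Arguments.

Definition set (T : Type) := T -> Prop.

Section Topo.
Variable T : Type.
Variable opn : set T -> Prop.

Definition compl (A : set T) : set T := fun x => ~ A x.
Definition subset (A B : set T) : Prop := forall x, A x -> B x.
Definition clopen (A : set T) : Prop := opn A /\ opn (compl A).

Definition hausdorff : Prop :=
  forall a b : T, a <> b ->
  exists U V, opn U /\ opn V /\ U a /\ V b /\ (forall x, U x -> V x -> False).

Definition compact (K : set T) : Prop :=
  forall (I : Type) (U : I -> set T),
    (forall i, opn (U i)) -> (forall x, K x -> exists i, U i x) ->
    exists l : list I, forall x, K x -> exists i, In i l /\ U i x.

Definition locally_compact : Prop :=
  forall x : T, exists U K, opn U /\ U x /\ subset U K /\ compact K.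

Definition countable_clopen_basis : Prop :=
  exists B : nat -> set T,
    (forall n, clopen (B n)) /\
    (forall U x, opn U -> U x -> exists n, B n x /\ subset (B n) U).

Definition no_isolated_points : Prop :=
  forall x : T, ~ opn (fun y => y = x).
End Topo.

Definition cont_on (S T : Type) (opnS : set S -> Prop) (opnT : set T -> Prop)
  (f : S -> T) (A : set S) : Prop :=
  forall V, opnT V -> exists U, opnS U /\ forall x, A x -> (U x <-> V (f x)).

Definition homeo_between (T : Type) (opn : set T -> Prop) (f : T -> T) (A B : set T) : Prop :=
  exists g : T -> T,
    (forall x, A x -> B (f x)) /\ (forall y, B y -> A (g y)) /\
    (forall x, A x -> g (f x) = x) /\ (forall y, B y -> f (g y) = y) /\
    cont_on opn opn f A /\ cont_on opn opn g B.

(** ** The Cantor set {0,1}^N with the product topology *)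
Definition cantor := nat -> bool.
Definition cantor_open (U : set cantor) : Prop :=
  forall x, U x -> exists n, forall y, (forall k, k < n -> y k = x k) -> U y.

Record group := Group {
  gcar :> Type;
  gmul : gcar -> gcar -> gcar;
  ginv : gcar -> gcar;
  gone : gcar;
  gmulA : forall a b c, gmul a (gmul b c) = gmul (gmul a b) c;
  gmul1 : forall a, gmul gone a = a;
  gmulV : forall a, gmul (ginv a) a = gone
}.

Arguments gmul {g} _ _.
Arguments ginv {g} _.
Arguments gone g : assert.

Definition countable_group (G : group) : Prop :=
  exists f : nat -> G, forall g : G, exists n, f n = g.

Definition partial_action (G : group) (Xt : G -> set cantor) (h : G -> cantor -> cantor) : Prop :=
  (forall t, cantor_open (Xt t)) /\
  (forall t, homeo_between cantor_open (h t) (Xt (ginv t)) (Xt t)) /\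
  (forall x, Xt (gone G) x) /\ (forall x, h (gone G) x = x) /\
  (forall s t y, (exists x, Xt (ginv t) x /\ Xt s x /\ h t x = y) <->
                 (Xt t y /\ Xt (gmul t s) y)) /\
  (forall s t x, Xt (ginv s) x -> Xt (gmul (ginv s) (ginv t)) x ->
                 h t (h s x) = h (gmul t s) x).

Definition env_rel (G : group) (Xt : G -> set cantor) (h : G -> cantor -> cantor)
  (p q : G * cantor) : Prop :=
  Xt (gmul (ginv (fst p)) (fst q)) (snd p) /\ h (gmul (ginv (fst q)) (fst p)) (snd p) = snd q.

Arguments env_rel {G} Xt h p q.

Definition envelope (G : group) (Xt : G -> set cantor) (h : G -> cantor -> cantor) : Type :=
  { S : set (G * cantor) | exists p, S = env_rel Xt h p }.

Arguments envelope {G} Xt h.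

Definition env_q (G : group) (Xt : G -> set cantor) (h : G -> cantor -> cantor)
  (p : G * cantor) : envelope Xt h :=
  exist _ (env_rel Xt h p) (ex_intro _ p eq_refl).

Arguments env_q {G} Xt h p.

(* product topology on G x X, G discrete *)
Definition prod_open (G : group) (W : set (G * cantor)) : Prop :=
  forall g : G, cantor_open (fun x => W (g, x)).

Arguments prod_open {G} W.

Definition env_open (G : group) (Xt : G -> set cantor) (h : G -> cantor -> cantor)
  (U : set (envelope Xt h)) : Prop :=
  prod_open (fun p => U (env_q Xt h p)).

Arguments env_open {G} Xt h U.
Arguments partial_action {G} Xt h.

(* Main.v *)
Require Import Defs.
From Stdlib Require Import List Classical FunctionalExtensionality PropExtensionality ClassicalEpsilon Arith Cantor Lia.

Section Grp.
Variable G : group.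
Lemma gmulVr (a : G) : gmul a (ginv a) = gone G.
Proof.
  rewrite <- (gmul1 _ (gmul a (ginv a))).
  rewrite <- (gmulV _ (ginv a)) at 1.
  rewrite <- gmulA, (gmulA _ (ginv a) a), gmulV, gmul1. apply gmulV.
Qed.
Lemma gmul1r (a : G) : gmul a (gone G) = a.
Proof. rewrite <- (gmulV _ a), gmulA, gmulVr, gmul1. reflexivity. Qed.
Lemma inv_uniq (x c : G) : gmul x c = gone G -> x = ginv c.
Proof. intro H. rewrite <- (gmul1r x), <- (gmulVr c), gmulA, H, gmul1. reflexivity. Qed.
Lemma ginvK (a : G) : ginv (ginv a) = a.
Proof. symmetry; apply inv_uniq, gmulVr. Qed.
Lemma ginvM (a b : G) : ginv (gmul a b) = gmul (ginv b) (ginv a).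
Proof. symmetry; apply inv_uniq. rewrite <- gmulA, (gmulA _ (ginv a)), gmulV, gmul1, gmulV. reflexivity. Qed.
Lemma ginv_div (a b : G) : ginv (gmul (ginv a) b) = gmul (ginv b) a.
Proof. rewrite ginvM, ginvK. reflexivity. Qed.
Lemma gcanc (a b c : G) : gmul (gmul (ginv a) b) (gmul (ginv b) c) = gmul (ginv a) c.
Proof. rewrite <- gmulA, (gmulA _ b), gmulVr, gmul1. reflexivity. Qed.
Lemma gself (a : G) : gmul (ginv a) a = gone G.
Proof. apply gmulV. Qed.
End Grp.

Lemma exist_eq' (A : Type) (P : A -> Prop) a b (pa : P a) (pb : P b) :
  a = b -> exist P a pa = exist P b pb.
Proof. intro E. subst b. f_equal. apply proof_irrelevance. Qed.

Section Env.
Variable G : group.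
Variable Xt : G -> set cantor.
Variable h : G -> cantor -> cantor.
Hypothesis PA : partial_action Xt h.

Lemma h_maps t x : Xt (ginv t) x -> Xt t (h t x).
Proof. destruct PA as [_ [H _]]. destruct (H t) as [g [H1 _]]. auto. Qed.
Lemma h_inj t x y : Xt (ginv t) x -> Xt (ginv t) y -> h t x = h t y -> x = y.
Proof. destruct PA as [_ [H _]]. destruct (H t) as [g [_ [_ [H3 _]]]].
  intros Hx Hy E. rewrite <- (H3 x Hx), <- (H3 y Hy), E. reflexivity. Qed.

Lemma env_refl p : env_rel Xt h p p.
Proof. destruct PA as [_ [_ [H1 [H2 _]]]]. destruct p as [r x]; unfold env_rel; simpl.
  rewrite gself. auto. Qed.

Lemma env_sym p q : env_rel Xt h p q -> env_rel Xt h q p.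
Proof. destruct PA as [_ [_ [H1 [H2 [_ H3]]]]]. destruct p as [r x], q as [s y]; unfold env_rel; simpl.
  intros [Hx Hy]. subst y. split.
  - apply h_maps. rewrite ginv_div. exact Hx.
  - rewrite H3. rewrite gcanc, gself. apply H2.
    rewrite ginv_div; exact Hx. rewrite !ginv_div, gcanc, gself. apply H1.
Qed.

Lemma env_trans p q w : env_rel Xt h p q -> env_rel Xt h q w -> env_rel Xt h p w.
Proof. destruct PA as [_ [_ [H1 [H2 [H4 H3]]]]]. destruct p as [r x], q as [s y], w as [u z]; unfold env_rel; simpl.
  intros [Hx Hy] [Hy' Hz]. subst y z.
  assert (Hxu : Xt (gmul (ginv r) u) x).
  { destruct (proj2 (H4 (gmul (ginv r) u) (gmul (ginv s) r) (h (gmul (ginv s) r) x))) as [x' [A [B C]]].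
    split. apply h_maps. rewrite ginv_div; exact Hx. rewrite gcanc. exact Hy'.
    rewrite ginv_div in A.
    rewrite <- (h_inj (gmul (ginv s) r) x' x); auto; rewrite ginv_div; auto. }
  split. exact Hxu.
  rewrite H3. rewrite gcanc. reflexivity.
  rewrite ginv_div; exact Hx. rewrite !ginv_div, gcanc. exact Hxu.
Qed.

Lemma class_eq p q : env_rel Xt h p q -> env_q Xt h p = env_q Xt h q.
Proof. intro E. unfold env_q.
  assert (F : env_rel Xt h p = env_rel Xt h q).
  { apply functional_extensionality; intro z; apply propositional_extensionality; split; intro H.
    - apply env_trans with p; auto. apply env_sym; auto.
    - apply env_trans with q; auto. }
  apply exist_eq'. exact F.
Qed.

Lemma q_eq_rel p q : env_q Xt h p = env_q Xt h q -> env_rel Xt h p q.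
Proof. intro E. apply (f_equal (@proj1_sig _ _)) in E. simpl in E. rewrite E. apply env_refl. Qed.

Lemma env_surj (e : envelope Xt h) : exists p, e = env_q Xt h p.
Proof. destruct e as [S [p Hp]]. exists p. subst S. reflexivity. Qed.
End Env.
Arguments env_surj {G Xt h} e.
Arguments class_eq {G Xt h} PA {p q}.
Arguments env_refl {G Xt h} PA p.
Arguments env_sym {G Xt h} PA {p q}.
Arguments env_trans {G Xt h} PA {p q w}.
Arguments q_eq_rel {G Xt h} PA {p q}.

Definition cyl (x : cantor) (n : nat) : set cantor := fun y => forall k, k < n -> y k = x k.
Definition upd (x : cantor) (n : nat) (v : bool) : cantor := fun k => if Nat.eqb k n then v else x k.

Fixpoint branch (cov : cantor -> nat -> Prop) (n : nat) : cantor :=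
  match n with
  | 0 => fun _ => false
  | S n => if excluded_middle_informative (cov (upd (branch cov n) n false) (S n))
           then upd (branch cov n) n true else upd (branch cov n) n false
  end.

Lemma branch_stable cov n k : k < n -> branch cov n k = branch cov (S k) k.
Proof.
  induction n; intro Hk. lia.
  destruct (Nat.eq_dec k n). subst; reflexivity.
  rewrite <- IHn by lia. simpl.
  destruct (excluded_middle_informative _); unfold upd;
  rewrite (proj2 (Nat.eqb_neq k n) n0); reflexivity.
Qed.

Lemma cantor_compact (I : Type) (U : I -> set cantor) :
  (forall i, cantor_open (U i)) -> (forall x, exists i, U i x) ->
  exists l : list I, forall x, exists i, In i l /\ U i x.
Proof.
  intros HU Hc. apply NNPP; intro Hn.
  set (cov := fun x n => exists l : list I, forall y, cyl x n y -> exists i, In i l /\ U i y).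
  assert (split_ : forall x n, cov (upd x n false) (S n) -> cov (upd x n true) (S n) -> cov x n).
  { intros x n [l0 H0] [l1 H1]. exists (l0 ++ l1). intros y Hy.
    destruct (y n) eqn:Yn.
    - destruct (H1 y) as [i [Hi Ui]].
      + intros k Hk. unfold upd. destruct (Nat.eqb_spec k n). subst; auto. apply Hy; lia.
      + exists i; split; auto. apply in_or_app; auto.
    - destruct (H0 y) as [i [Hi Ui]].
      + intros k Hk. unfold upd. destruct (Nat.eqb_spec k n). subst; auto. apply Hy; lia.
      + exists i; split; auto. apply in_or_app; auto. }
  assert (inv : forall n, ~ cov (branch cov n) n).
  { induction n.
    - intros [l Hl]. apply Hn. exists l. intro x. apply Hl. intros k Hk; lia.
    - simpl. destruct (excluded_middle_informative _) as [C|C].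
      + intro C'. apply IHn. apply split_; auto.
      + exact C. }
  set (z := fun k => branch cov (S k) k).
  destruct (Hc z) as [i Hi]. destruct (HU i z Hi) as [m Hm].
  apply (inv m). exists (i :: nil). intros y Hy. exists i; split. left; reflexivity.
  apply Hm. intros k Hk. rewrite Hy by auto. unfold z. apply branch_stable; auto.
Qed.

Lemma cyl_open x n : cantor_open (cyl x n).
Proof. intros y Hy. exists n. intros w Hw k Hk. rewrite Hw by auto. auto. Qed.
Lemma cyl_copen x n : cantor_open (compl (cyl x n)).
Proof. intros y Hy. exists n. intros w Hw C. apply Hy. intros k Hk. rewrite <- Hw by auto. auto. Qed.
Lemma coord_open k v : cantor_open (fun a : cantor => a k = v).
Proof. intros y Hy. exists (S k). intros w Hw. rewrite Hw by lia. auto. Qed.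
Lemma open_inter A B : cantor_open A -> cantor_open B -> cantor_open (fun x => A x /\ B x).
Proof. intros HA HB x [Ax Bx]. destruct (HA x Ax) as [n Hn], (HB x Bx) as [m Hm].
  exists (max n m). intros y Hy. split; [apply Hn|apply Hm]; intros k Hk; apply Hy; lia. Qed.
Lemma open_union A B : cantor_open A -> cantor_open B -> cantor_open (fun x => A x \/ B x).
Proof. intros HA HB x [Ax|Bx]. destruct (HA x Ax) as [n Hn]; exists n; intros; left; auto.
  destruct (HB x Bx) as [n Hn]; exists n; intros; right; auto. Qed.
Lemma open_ext A B : cantor_open A -> (forall x, A x <-> B x) -> cantor_open B.
Proof. intros HA E x Bx. destruct (HA x (proj2 (E x) Bx)) as [n Hn]. exists n. intros; apply E; auto. Qed.

Lemma code_exists len : forall x : cantor, exists c, forall k, k < len -> Nat.testbit c k = x k.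
Proof.
  induction len; intro x. exists 0; intros; lia.
  destruct (IHlen (fun k => x (S k))) as [c Hc].
  exists ((if x 0 then 1 else 0) + 2 * c). intros [|k] Hk.
  - simpl. destruct (x 0); simpl.
    + replace (S (c + (c + 0))) with (1 + 2 * c) by lia. rewrite Nat.odd_add_mul_2. reflexivity.
    + replace (c + (c + 0)) with (0 + 2 * c) by lia. rewrite Nat.odd_add_mul_2. reflexivity.
  - simpl Nat.testbit. rewrite <- Hc by lia. f_equal.
    destruct (x 0); simpl Nat.add.
    + rewrite <- Nat.div2_succ_double. unfold Nat.double. f_equal.
    + replace (2*c) with (Nat.double c) by (unfold Nat.double; lia). apply Nat.div2_double.
Qed.

Section Main.
Variable G : group.
Variable Xt : G -> set cantor.
Variable h : G -> cantor -> cantor.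
Hypothesis PA : partial_action Xt h.
Hypothesis CL : forall t : G, clopen cantor_open (Xt t).

Definition img (t : G) (A : set cantor) : set (envelope Xt h) :=
  fun e => exists a, A a /\ proj1_sig e (t, a).

Lemma h_cont t V : cantor_open V -> exists U, cantor_open U /\
  forall x, Xt (ginv t) x -> (U x <-> V (h t x)).
Proof. intro HV. destruct PA as [_ [H _]]. destruct (H t) as [g [_ [_ [_ [_ [Hc _]]]]]]. apply Hc; auto. Qed.

Lemma img_pre t A g z : img t A (env_q Xt h (g, z)) <->
  Xt (gmul (ginv g) t) z /\ A (h (gmul (ginv t) g) z).
Proof. unfold img, env_q, env_rel; simpl. split.
  - intros [a [Ha [H1 H2]]]. subst a. auto.
  - intros [H1 H2]. eauto. Qed.

Lemma img_open t A : cantor_open A -> env_open Xt h (img t A).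
Proof. intros HA g. destruct (h_cont (gmul (ginv t) g) A HA) as [U [HU E]].
  rewrite ginv_div in E.
  apply open_ext with (fun z => Xt (gmul (ginv g) t) z /\ U z).
  apply open_inter; auto. apply CL.
  intro z. rewrite img_pre. split; intros [H1 H2]; split; auto; apply E; auto.
Qed.

Lemma img_copen t A : cantor_open A -> cantor_open (compl A) -> env_open Xt h (compl (img t A)).
Proof. intros HA HcA g. destruct (h_cont (gmul (ginv t) g) (compl A) HcA) as [U [HU E]].
  rewrite ginv_div in E.
  apply open_ext with (fun z => compl (Xt (gmul (ginv g) t)) z \/ (Xt (gmul (ginv g) t) z /\ U z)).
  apply open_union. apply CL. apply open_inter; auto. apply CL.
  intro z. unfold compl at 2. rewrite img_pre. split.
  - intros [H|[H1 H2]] [K1 K2]. contradiction. apply (E z H1); auto.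
  - intro H. destruct (classic (Xt (gmul (ginv g) t) z)) as [K|K]; [right|left; exact K].
    split; auto. apply E; auto. intro Ah. apply H; auto.
Qed.

Lemma img_mem t A e a : A a -> proj1_sig e (t, a) -> img t A e.
Proof. intros; exists a; auto. Qed.

Lemma proj_q p q : proj1_sig (env_q Xt h p) q = env_rel Xt h p q.
Proof. reflexivity. Qed.

Theorem main_h : hausdorff (env_open Xt h).
Proof.
  intros e1 e2 Ne.
  destruct (env_surj e1) as [[r x] ->], (env_surj e2) as [[s y] ->].
  assert (NR : ~ env_rel Xt h (r, x) (s, y)). { intro R. apply Ne, class_eq; auto. }
  destruct (classic (Xt (gmul (ginv r) s) x)) as [Hx|Hx].
  - assert (Hd : h (gmul (ginv s) r) x <> y). { intro E; apply NR; split; auto. }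
    destruct (not_all_ex_not _ _ (fun H => Hd (functional_extensionality _ _ H))) as [k Hk].
    exists (img s (fun a => a k = h (gmul (ginv s) r) x k)), (img s (fun a => a k = y k)).
    split. apply img_open, coord_open. split. apply img_open, coord_open.
    split. exists (h (gmul (ginv s) r) x). split; auto. split; auto.
    split. exists y. split; auto. apply env_refl; auto.
    intros e [a [Ha Ea]] [b [Hb Eb]].
    destruct (env_surj e) as [[g w] ->]. rewrite proj_q in Ea, Eb.
    destruct Ea as [_ Ea], Eb as [_ Eb]. simpl in Ea, Eb. apply Hk. congruence.
  - exists (img r (compl (Xt (gmul (ginv r) s)))), (img s (fun _ => True)).
    split. apply img_open, CL. split. apply img_open. intros z _; exists 0; auto.
    split. exists x. split; auto. apply env_refl; auto.
    split. exists y. split; auto. apply env_refl; auto.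
    intros e [a [Ha Ea]] [b [Hb Eb]].
    destruct (env_surj e) as [[g w] ->]. rewrite proj_q in Ea, Eb.
    apply Ha. destruct (env_trans PA (env_sym PA Ea) Eb) as [K _]. exact K.
Qed.

Theorem main_lc : locally_compact (env_open Xt h).
Proof.
  intro e. destruct (env_surj e) as [[t x] ->].
  set (U := img t (fun _ => True)).
  exists U, U. split. apply img_open. intros z _; exists 0; auto.
  split. exists x. split; auto. apply env_refl; auto.
  split. intros z Hz; exact Hz.
  intros I W HW Hcov.
  destruct (cantor_compact _ (fun i => fun a => W i (env_q Xt h (t, a)))) as [l Hl].
  - intro i. apply (HW i t).
  - intro a. apply Hcov. exists a. split; auto. apply env_refl; auto.
  - exists l. intros e [a [_ Ea]]. destruct (env_surj e) as [p ->].
    destruct (Hl a) as [i [Hi Wi]]. exists i. split; auto.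
    rewrite (class_eq PA Ea). exact Wi.
Qed.

Theorem main_nip : no_isolated_points (env_open Xt h).
Proof.
  intros e He. destruct (env_surj e) as [[t x] ->].
  destruct (He t x eq_refl) as [n Hn].
  assert (E := Hn (upd x n (negb (x n)))).
  simpl in E. refine (_ (E _)).
  - intro Q. apply q_eq_rel in Q; auto. destruct Q as [_ Q]. simpl in Q.
    rewrite gself in Q. destruct PA as [_ [_ [_ [H2 _]]]]. rewrite H2 in Q.
    apply (f_equal (fun f => f n)) in Q. unfold upd in Q. rewrite Nat.eqb_refl in Q.
    destruct (x n); discriminate.
  - intros k Hk. unfold upd. destruct (Nat.eqb_spec k n). lia. reflexivity.
Qed.

Theorem main_basis : countable_group G -> countable_clopen_basis (env_open Xt h).
Proof.
  intros [f Hf].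
  exists (fun k => let (a, r) := of_nat k in let (len, c) := of_nat r in
                   img (f a) (cyl (fun i => Nat.testbit c i) len)).
  split.
  - intro k. destruct (of_nat k) as [a r]. destruct (of_nat r) as [len c].
    split. apply img_open, cyl_open. apply img_copen. apply cyl_open. apply cyl_copen.
  - intros U e HU Ue. destruct (env_surj e) as [[g z] ->].
    destruct (HU g z Ue) as [m Hm].
    destruct (code_exists m z) as [c Hc]. destruct (Hf g) as [a Ha].
    exists (to_nat (a, to_nat (m, c))). rewrite !cancel_of_to. subst g. split.
    + exists z. split. intros k Hk. symmetry; auto. apply env_refl; auto.
    + intros e' [b [Hb Eb]]. destruct (env_surj e') as [p ->].
      rewrite (class_eq PA Eb). apply Hm. intros k Hk. rewrite Hb by auto. auto.
Qed.
End Main.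

Theorem proposition3p2 (G : group) (Xt : G -> set cantor) (h : G -> cantor -> cantor) :
  countable_group G ->
  partial_action Xt h ->
  (forall t : G, clopen cantor_open (Xt t)) ->
  hausdorff (env_open Xt h) /\
  locally_compact (env_open Xt h) /\
  countable_clopen_basis (env_open Xt h) /\
  no_isolated_points (env_open Xt h).
Proof.
  intros HG PA CL. split. apply main_h; auto. split. apply main_lc; auto.
  split. apply main_basis; auto. apply main_nip; auto.
Qed.
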